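(* Under the hypotheses of Theorem 4 (stated in the context), define $\bar{\boldsymbol\rho}_\star\in\mathbb C^N$ by $$(\bar{\boldsymbol\rho}_\star)_j=\sum_{q:\ \vec{\mathbf z}_q\in\mathcal B_r(\vec{\mathbf z}_j)}(\boldsymbol\rho_\star)_q\,\langle\mathbf g_j,\mathbf g_q\rangle\ \ \text{for } j\in\mathcal S,\qquad(\bar{\boldsymbol\rho}_\star)_j=0\ \ \text{for } j\notin\mathcal S.$$ Then $$\|\boldsymbol\rho-\bar{\boldsymbol\rho}_\star\|_1\le\frac{2\,\mathcal I(\mathcal Y)}{r}\,\|\boldsymbol\rho\|_1.$$
   Context: Let $W$ be a set (the imaging region) and $M\ge1$. For each $\vec{\mathbf y}\in W$ let $\mathbf g_{\vec{\mathbf y}}\in\mathbb C^M$ be a vector with $\|\mathbf g_{\vec{\mathbf y}}\|_2=1$. Let $\vec{\mathbf z}_1,\dots,\vec{\mathbf z}_N\in W$ be distinct (grid) points, write $\mathbf g_j=\mathbf g_{\vec{\mathbf z}_j}$, and let $\mathcal G\in\mathbb C^{M\times N}$ be the matrix with columns $\mathbf g_j$. Inner product: $\langle\mathbf u,\mathbf v\rangle=\mathbf u^H\mathbf v=\sum_i\overline{u_i}v_i$. $\|\cdot\|_1$ is the $\ell_1$ norm. Semi-metric: $\mathscr D(\vec{\mathbf y},\vec{\mathbf y}')=1-|\langle\mathbf g_{\vec{\mathbf y}},\mathbf g_{\vec{\mathbf y}'}\rangle|$; ball $\mathcal B_r(\vec{\mathbf y})=\{\vec{\mathbf y}'\in W:\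 \mathscr D(\vec{\mathbf y},\vec{\mathbf y}')<r\}$. Interaction coefficient: for a finite set $\mathcal Y\subset W$ and each $q$, let $\mathscr N(\vec{\mathbf z}_q)\in\mathcal Y$ be a point of $\mathcal Y$ minimizing $\mathscr D(\vec{\mathbf z}_q,\cdot)$ over $\mathcal Y$; then $\mathcal I(\mathcal Y)=\max_{q=1,\dots,N}\sum_{\vec{\mathbf y}\in\mathcal Y\setminus\{\mathscr N(\vec{\mathbf z}_q)\}}|\langle\mathbf g_{\vec{\mathbf y}},\mathbf g_q\rangle|$. Hypotheses of Theorem 4: $\mathcal S\subset\{1,\dots,N\}$ with $|\mathcal S|=s$; $\boldsymbol\rho\in\mathbb C^N$ supported in $\mathcal S$; $\mathbf d=\mathcal G\boldsymbol\rho$; $\mathcal Y=\{\vec{\mathbf z}_j:j\in\mathcal S\}$; $r\in(0,1)$ with the balls $\mathcal B_r(\vec{\mathbf z}_j)$, $j\in\mathcal S$, pairwise disjoint; $\boldsymbol\rho_\star$ is a minimizer of $\|\mathbf x\|_1$ over $\mathbf x\in\mathbb C^N$ subject to $\mathcal G\mathbf x=\mathbf d$. *)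

(* Defs.v *)
(* The complex field C is abstracted as an arbitrary
   numClosedFieldType R (C is one), with conjugation x^* and modulus `|x|. *)
From HB Require Import structures.
From mathcomp Require Import all_boot all_order all_algebra.
Set Implicit Arguments. Unset Strict Implicit. Unset Printing Implicit Defensive.
Import Order.TTheory GRing.Theory Num.Theory.
Local Open Scope ring_scope.

Section Defs.
Variable R : numClosedFieldType.

Definition inner (M : nat) (u v : 'I_M -> R) : R := \sum_(i < M) (u i)^* * v i.

Definition norm2sq (M : nat) (u : 'I_M -> R) : R := \sum_(i < M) `|u i| ^+ 2.

Definition l1 (N : nat) (x : 'I_N -> R) : R := \sum_(j < N) `|x j|.

Definition semid (W : Type) (M : nat) (g : W -> 'I_M -> R) (y y' : W) : R :=
  1 - `|inner (g y) (g y')|.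

Definition Gapply (W : Type) (M N : nat) (g : W -> 'I_M -> R) (z : 'I_N -> W)
  (x : 'I_N -> R) : 'I_M -> R := fun i => \sum_(j < N) g (z j) i * x j.

(* Interaction coefficient I(Y) for Y = {z_j : j in S}, where nn q is the
   chosen index in S with z_{nn q} = N(z_q). *)
Definition interaction (W : Type) (M N : nat) (g : W -> 'I_M -> R)
  (z : 'I_N -> W) (S : {set 'I_N}) (nn : 'I_N -> 'I_N) : R :=
  \big[Num.max/0]_(q < N)
     \sum_(j in S | j != nn q) `|inner (g (z j)) (g (z q))|.

Definition rhobar (W : Type) (M N : nat) (g : W -> 'I_M -> R)
  (z : 'I_N -> W) (S : {set 'I_N}) (r : R) (rs : 'I_N -> R) : 'I_N -> R :=
  fun j => if j \in S then
     \sum_(q < N | semid g (z j) (z q) < r) rs q * inner (g (z j)) (g (z q))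
   else 0.

End Defs.

(* Main.v *)
Require Import Defs.
From HB Require Import structures.
From mathcomp Require Import all_boot all_order all_algebra.
From mathcomp Require Import ring.
Import Order.TTheory GRing.Theory Num.Theory.
Local Open Scope ring_scope.

Lemma max_ge (R : numDomainType) (x y : R) : x \is Num.real -> y \is Num.real ->
  x <= Num.max x y /\ y <= Num.max x y.
Proof.
move=> hx hy; case: (real_leP hx hy) => h; split => //; last exact: ltW.
Qed.

Lemma bigmax_ge (R : numDomainType) (I : eqType) (s : seq I) (f : I -> R) :
  (forall i, 0 <= f i) ->
  0 <= \big[Num.max/0]_(i <- s) f i /\ forall i, i \in s -> f i <= \big[Num.max/0]_(i <- s) f i.
Proof.
move=> f0; elim: s => [|a s [IH1 IH2]]; first by rewrite big_nil.
rewrite big_cons.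
have [h1 h2] := @max_ge _ _ _ (ger0_real (f0 a)) (ger0_real IH1).
split; first exact: le_trans (f0 a) h1.
move=> i; rewrite inE => /orP [/eqP -> //| /IH2 h]; exact: le_trans h h2.
Qed.

Lemma inner_self (R : numClosedFieldType) M (u : 'I_M -> R) :
  norm2sq u = 1 -> inner u u = 1.
Proof.
move=> <-; rewrite /inner /norm2sq; apply: eq_bigr => i _; by rewrite normCKC.
Qed.

Lemma inner_le1 (R : numClosedFieldType) M (u v : 'I_M -> R) :
  norm2sq u = 1 -> norm2sq v = 1 -> `|inner u v| <= 1.
Proof.
move=> hu hv; rewrite /inner.
apply: le_trans (ler_norm_sum _ _ _) _.
have -> : (1 : R) = (\sum_(i < M) (`|u i| ^+ 2 + `|v i| ^+ 2)) / 2.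
  rewrite big_split /= -/(norm2sq u) -/(norm2sq v) hu hv divff //. exact: (lt0r_neq0 (ltr0Sn _ 1)).
rewrite mulr_suml; apply: ler_sum => i _.
rewrite normrM norm_conjC ler_pdivlMr ?ltr0n // -subr_ge0.
have -> : (`|u i| ^+ 2 + `|v i| ^+ 2 - `|u i| * `|v i| * 2) = (`|u i| - `|v i|) ^+ 2 by ring.
by rewrite -realEsqr rpredB // normr_real.
Qed.

Lemma inner_conj (R : numClosedFieldType) M (u v : 'I_M -> R) :
  inner v u = (inner u v)^*.
Proof.
rewrite /inner rmorph_sum; apply: eq_bigr => i _; by rewrite rmorphM /= conjCK mulrC.
Qed.

Lemma inner_sym (R : numClosedFieldType) M (u v : 'I_M -> R) :
  `|inner v u| = `|inner u v|.
Proof. by rewrite inner_conj norm_conjC. Qed.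

Lemma inner_G (R : numClosedFieldType) (W : Type) M N (g : W -> 'I_M -> R)
  (z : 'I_N -> W) (u : 'I_M -> R) (x : 'I_N -> R) :
  inner u (Gapply g z x) = \sum_(q < N) x q * inner u (g (z q)).
Proof.
rewrite /inner /Gapply.
under eq_bigr do rewrite mulr_sumr.
rewrite exchange_big; apply: eq_bigr => q _; rewrite mulr_sumr.
apply: eq_bigr => i _; ring.
Qed.

Lemma sum_sub (R : numDomainType) N (P Q : pred 'I_N) (F : 'I_N -> R) :
  (forall i, P i -> Q i) -> (forall i, Q i -> 0 <= F i) ->
  \sum_(i < N | P i) F i <= \sum_(i < N | Q i) F i.
Proof.
move=> PQ F0; rewrite [X in _ <= X]big_mkcond [X in X <= _]big_mkcond.
apply: ler_sum => i _; case: (boolP (P i)) => hP; first by rewrite (PQ _ hP).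
by case: (boolP (Q i)) => // /F0.
Qed.


Lemma arith (R : numFieldType) (L P Ps I r m2 : R) :
  0 < r -> r < 1 -> 0 <= I -> Ps <= P ->
  L <= Ps * I + (1 - r) * m2 + I * P ->
  P <= Ps * (1 + I) - r * m2 + I * P ->
  L <= 2 * I / r * P.
Proof.
move=> r0 r1 I0 h3 h1 h2.
rewrite mulrAC ler_pdivlMr // -subr_ge0.
move: h1; rewrite -subr_ge0 => h1.
move: h2; rewrite -subr_ge0 => h2.
move: h3; rewrite -subr_ge0 => h3.
have r0' : 0 <= r by exact: ltW.
have r1' : 0 <= 1 - r by rewrite subr_ge0 ltW.
have -> : 2 * I * P - L * r =
   r * I * (P - Ps) + (1 - r) * (1 + I) * (P - Ps)
   + (1 - r) * (Ps * (1 + I) - r * m2 + I * P - P)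
   + r * (Ps * I + (1 - r) * m2 + I * P - L) by ring.
by rewrite !addr_ge0 // !mulr_ge0 // addr_ge0.
Qed.

Theorem corollary1 (R : numClosedFieldType) (W : Type) (M N : nat)
  (g : W -> 'I_M -> R) (z : 'I_N -> W) (S : {set 'I_N})
  (rho rho_star : 'I_N -> R) (r : R) (nn : 'I_N -> 'I_N) :
  (0 < M)%N ->
  (forall y : W, norm2sq (g y) = 1) ->
  injective z ->
  (forall j, j \notin S -> rho j = 0) ->
  0 < r -> r < 1 ->
  (forall j k, j \in S -> k \in S -> j != k ->
     forall y : W, ~ (semid g (z j) y < r /\ semid g (z k) y < r)) ->
  Gapply g z rho_star = Gapply g z rho ->
  (forall x : 'I_N -> R, Gapply g z x = Gapply g z rho -> l1 rho_star <= l1 x) ->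
  (forall q, nn q \in S /\
     forall j, j \in S -> semid g (z q) (z (nn q)) <= semid g (z q) (z j)) ->
  l1 (fun j => rho j - rhobar g z S r rho_star j)
    <= 2 * interaction g z S nn / r * l1 rho.
Proof.
move=> _ hg _ hrho r0 r1 hdisj hG hmin hnn.
set a := fun j q => inner (g (z j)) (g (z q)).
set near := fun j q => semid g (z j) (z q) < r.
set I := interaction g z S nn.
set P := l1 rho.
set Ps := l1 rho_star.
have aj1 : forall j, a j j = 1 by move=> j; exact: inner_self.
have ale1 : forall j q, `|a j q| <= 1 by move=> j q; exact: inner_le1.
have a0 : forall j q, 0 <= `|a j q| by move=> j q; exact: normr_ge0.
have asym : forall j q, `|a j q| = `|a q j| by move=> j q; exact: inner_sym.
have disj : forall j k q, j \in S -> k \in S -> near j q -> near k q -> j = k.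
  move=> j k q jS kS hj hk; case: (eqVneq j k) => // hjk.
  by case: (hdisj j k jS kS hjk (z q)).
have nnear : forall q j, j \in S -> near j q -> nn q = j.
  move=> q j jS hj; have [nS hle] := hnn q; apply: (disj _ _ q nS jS) => //.
  rewrite /near /semid -/(a (nn q) q) asym.
  apply: le_lt_trans (hle j jS) _.
  by rewrite /semid -/(a q j) asym.
have nnk : forall k, k \in S -> nn k = k.
  move=> k kS; apply: nnear => //; by rewrite /near /semid -/(a k k) aj1 normr1 subrr.
have [Ige0 Ige'] := @bigmax_ge R _ (index_enum 'I_N)
   (fun q => \sum_(j in S | j != nn q) `|a j q|) (fun q => sumr_ge0 _ (fun j _ => a0 j q)).
have Ige : forall q, \sum_(j in S | j != nn q) `|a j q| <= I.
  by move=> q; apply: Ige'; rewrite mem_index_enum.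
have Pdef : P = \sum_(j in S) `|rho j|.
  rewrite /P /l1 [RHS]big_mkcond; apply: eq_bigr => j _.
  by case: ifP => // /negbT /hrho ->; rewrite normr0.
have PsP : Ps <= P by apply: hmin.
have Ps0 : 0 <= Ps by apply: sumr_ge0 => q _; exact: normr_ge0.
have P0 : 0 <= P by apply: sumr_ge0 => q _; exact: normr_ge0.
have Aeq : forall j, j \in S -> rho j = \sum_q rho_star q * a j q
                      - \sum_(k in S | k != j) rho k * a j k.
  move=> j jS; have := congr1 (inner (g (z j))) hG; rewrite !inner_G /a => ->.
  rewrite (bigID (fun k => k \in S)) /=. rewrite [X in _ + X - _]big1 ?addr0; last first.
    by move=> k /hrho ->; rewrite mul0r.
  by rewrite (bigD1 j) //= inner_self // mulr1 addrK.
have helper : forall x y u : R, x + y - u - x = y - u by move=> x y u; ring.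
have Lb : l1 (fun j => rho j - rhobar g z S r rho_star j) <=
    \sum_(j in S) (\sum_(q | ~~ near j q) `|rho_star q| * `|a j q|
                   + \sum_(k in S | k != j) `|rho k| * `|a j k|).
  rewrite /l1 [X in _ <= X]big_mkcond; apply: ler_sum => j _.
  case: ifP => jS; last first.
    by rewrite /rhobar jS (hrho _ (negbT jS)) subrr normr0.
  rewrite /rhobar jS (Aeq j jS) (bigID (fun q => near j q)) /= helper.
  apply: le_trans (ler_normB _ _) _; apply: lerD.
    apply: le_trans (ler_norm_sum _ _ _) _; apply: ler_sum => q _; by rewrite normrM.
  apply: le_trans (ler_norm_sum _ _ _) _; apply: ler_sum => q _; by rewrite normrM.
set f := fun q => \sum_(j in S | ~~ near j q) `|a j q|.
set c := fun q => \sum_(j in S) `|a j q|.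
have Teq : \sum_(j in S) \sum_(q | ~~ near j q) `|rho_star q| * `|a j q|
           = \sum_q `|rho_star q| * f q.
  rewrite (exchange_big_dep xpredT) //=; apply: eq_bigr => q _.
  by rewrite /f mulr_sumr.
have Beq : \sum_(j in S) \sum_(k in S | k != j) `|rho k| * `|a j k| <= I * P.
  rewrite (exchange_big_dep (fun k => k \in S)) /=; last by move=> j k _ /andP[].
  rewrite Pdef mulr_sumr; apply: ler_sum => k kS.
  rewrite -mulr_sumr mulrC; apply: ler_wpM2r; first exact: normr_ge0.
  apply: le_trans (Ige k); rewrite (nnk k kS); apply: sum_sub => [j /andP[-> /andP[_]]|j _].
    by rewrite eq_sym.
  exact: a0.
have Db : P <= \sum_q `|rho_star q| * c q + I * P.
  rewrite {1}Pdef; apply: le_trans (_ : _ <= \sum_(j in S) (\sum_q `|rho_star q| * `|a j q|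
                   + \sum_(k in S | k != j) `|rho k| * `|a j k|)) _.
    apply: ler_sum => j jS; rewrite (Aeq j jS).
    apply: le_trans (ler_normB _ _) _; apply: lerD.
      apply: le_trans (ler_norm_sum _ _ _) _; apply: ler_sum => q _; by rewrite normrM.
    apply: le_trans (ler_norm_sum _ _ _) _; apply: ler_sum => q _; by rewrite normrM.
  rewrite big_split /=; apply: lerD => //.
  rewrite (exchange_big_dep xpredT) //= le_eqVlt; apply/orP; left; apply/eqP; apply: eq_bigr => q _.
  rewrite /c mulr_sumr; apply: eq_bigl => j; by rewrite andbT.
set e := fun q => if near (nn q) q then (0 : R) else 1.
have rreal : r \is Num.real by exact: gtr0_real.
have fc : forall q, f q <= I + (1 - r) * e q /\ c q <= 1 + I - r * e q.
  move=> q; have [nS _] := hnn q.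
  have cdec : c q = `|a (nn q) q| + \sum_(j in S | j != nn q) `|a j q|.
    by rewrite /c (bigD1 (nn q)).
  rewrite /e; case: ifP => hn.
    rewrite !mulr0 addr0 subr0; split.
      apply: le_trans (Ige q); apply: sum_sub => [j /andP[jS hj]|j _].
        rewrite jS /=; apply/eqP => ejn; move: hj; by rewrite ejn hn.
      exact: a0.
    by rewrite cdec; apply: lerD; [exact: ale1 | exact: Ige].
  have allfar : forall j, j \in S -> ~~ near j q.
    move=> j jS; apply/negP => hj; move: hn; by rewrite (nnear q j jS hj) hj.
  have fcq : f q = c q.
    rewrite /f /c; apply: eq_bigl => j; case: (boolP (j \in S)) => //= jS.
    by rewrite allfar.
  have anear : `|a (nn q) q| <= 1 - r.
    have sreal : semid g (z (nn q)) (z q) \is Num.real.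
      by rewrite /semid; apply: rpredB; [exact: real1 | exact: normr_real].
    move: hn; rewrite /near (real_ltNge sreal rreal) => /negbFE.
    rewrite /semid -/(a (nn q) q) -subr_ge0 => h; rewrite -subr_ge0.
    by rewrite addrAC.
  rewrite !mulr1; split; rewrite ?fcq cdec.
    by rewrite [X in X <= _]addrC; apply: lerD; [exact: Ige | exact: anear].
  rewrite addrAC.
  by apply: lerD; [exact: anear | exact: Ige].
set m2 := \sum_q `|rho_star q| * e q.
have e0 : forall q, 0 <= e q by move=> q; rewrite /e; case: ifP.
have m20 : 0 <= m2 by apply: sumr_ge0 => q _; apply: mulr_ge0 => //; exact: normr_ge0.
have Tb : \sum_q `|rho_star q| * f q <= Ps * I + (1 - r) * m2.
  apply: le_trans (_ : _ <= \sum_q (`|rho_star q| * I + (1 - r) * (`|rho_star q| * e q))) _.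
    apply: ler_sum => q _.
    apply: le_trans (ler_wpM2l (normr_ge0 _) (fc q).1) _.
    by rewrite mulrDr mulrCA.
  by rewrite big_split /= -mulr_suml -mulr_sumr.
have Cb : \sum_q `|rho_star q| * c q <= Ps * (1 + I) - r * m2.
  apply: le_trans (_ : _ <= \sum_q (`|rho_star q| * (1 + I) - r * (`|rho_star q| * e q))) _.
    apply: ler_sum => q _.
    apply: le_trans (ler_wpM2l (normr_ge0 _) (fc q).2) _.
    by rewrite mulrBr mulrCA.
  by rewrite sumrB -mulr_suml -mulr_sumr.
apply: (@arith R _ P Ps I r m2 r0 r1 _ PsP); first exact: Ige0.
  apply: le_trans Lb _; rewrite big_split /= Teq; apply: lerD => //.
apply: le_trans Db _; apply: lerD => //.
Qed.
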